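(* Let $(\sqrt5-1)/4<\alpha<1/2$. If $(x,y)\in A_1$ and $G_\alpha(x,y)\in A_2$, then $G_\alpha^2(x,y)\in A_2$; i.e., a point entering $A_2$ from $A_1$ stays in $A_2$ for at least two steps.
   Context: Let $\tau:[0,1]\to[0,1]$ be the symmetric tent map, $\tau(x)=2x$ for $0\le x<1/2$ and $\tau(x)=2-2x$ for $1/2\le x\le 1$. For $0<\alpha<1$ define $G_\alpha:[0,1]^2\to[0,1]^2$ by $G_\alpha(x,y)=(y,\tau(\alpha y+(1-\alpha)x))$. Let $S(x,y)=\alpha y+(1-\alpha)x$, $A_1=\{(x,y)\in[0,1]^2: S(x,y)<1/2\}$ and $A_2=\{(x,y)\in[0,1]^2: S(x,y)\ge 1/2\}$. *)

(* Defs.v *)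
From Stdlib Require Import Reals.
Open Scope R_scope.

Definition tent (x : R) : R := if Rlt_dec x (1/2) then 2 * x else 2 - 2 * x.

Definition Sfun (a x y : R) : R := a * y + (1 - a) * x.

Definition G (a : R) (p : R * R) : R * R :=
  (snd p, tent (Sfun a (fst p) (snd p))).

Definition in_square (p : R * R) : Prop :=
  0 <= fst p <= 1 /\ 0 <= snd p <= 1.

Definition regA1 (a : R) (p : R * R) : Prop :=
  in_square p /\ Sfun a (fst p) (snd p) < 1/2.

Definition regA2 (a : R) (p : R * R) : Prop :=
  in_square p /\ Sfun a (fst p) (snd p) >= 1/2.

(* Main.v *)
Require Import Defs.
From Stdlib Require Import Reals Lra Psatz.
Open Scope R_scope.

Lemma key_a (a : R) : (sqrt 5 - 1) / 4 < a -> 4*a*a + 2*a - 1 > 0.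
Proof.
  intros H. assert (Hs : sqrt 5 * sqrt 5 = 5) by (apply sqrt_sqrt; lra).
  assert (0 <= sqrt 5) by apply sqrt_pos.
  nra.
Qed.

Theorem proposition7 (a x y : R) :
  (sqrt 5 - 1) / 4 < a -> a < 1/2 ->
  regA1 a (x, y) -> regA2 a (G a (x, y)) ->
  regA2 a (G a (G a (x, y))).
Proof.
  intros Ha Ha2 [[[Hx1 Hx2] [Hy1 Hy2]] HS] [[_ [Hz1 Hz2]] HS2].
  pose proof (key_a a Ha) as K.
  assert (a > 0).
  { assert (1 < sqrt 5). { rewrite <- sqrt_1. apply sqrt_lt_1; lra. } lra. }
  unfold regA2, regA1, G, in_square, Sfun in *; simpl in *.
  unfold tent in *.
  destruct (Rlt_dec (a * y + (1 - a) * x) (1/2)); [|lra].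
  destruct (Rlt_dec (a * (2 * (a * y + (1 - a) * x)) + (1 - a) * y) (1/2)); [lra|].
  simpl in *.
  set (z := 2 * (a * y + (1 - a) * x)) in *.
  assert (z >= 2*a*y) by (unfold z; nra).
  split; [split; [lra|] |].
  - split; nra.
  - destruct (Rle_lt_dec z (2*a)).
    + assert (a*y <= z/2) by lra.
      assert ((1-a)*(a*y) <= (1-a)*(z/2)) by (apply Rmult_le_compat_l; lra).
      assert (a*a*z <= a*a*(2*a)) by (apply Rmult_le_compat_l; nra).
      nra.
    + assert ((1-a)*y <= 1-a) by nra.
      assert ((1-2*a)*(1+a)*z >= (1-2*a)*(1+a)*(2*a)) by (apply Rmult_ge_compat_l; nra).
      nra.
Qed.
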